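(* Consider $n\in\mathbb{N}$ users whose states $x^i_t\in\{0,1\}$ ($i\in\{1,\dots,n\}$, $t\in\mathbb{N}$) evolve under the controlled dynamics and strategies described in the context, and let $m_t=\frac1n\sum_{i=1}^n \mathbb{1}(x^i_t=1)$. For every $t\in\mathbb{N}$, every realization $m_{1:t}\in\mathcal{M}^t$ of the mean-field history, and all reserve and demand actions $g^r_{1:t}\in(\{1,\dots,k\})^t$, $g^d_{1:t}\in(\{1,\dots,k\})^t$, $$\mathbb{P}(m_{t+1}\mid m_{1:t},g^r_{1:t},g^d_{1:t})=\mathbb{P}(m_{t+1}\mid m_t,g^r_t,g^d_t),$$ i.e. the mean-field process is a controlled Markov process under the reserve and demand actions.
   Context: Fix $n\in\mathbb{N}$ users, a demand probability $p\in(0,1)$, and $k\in\mathbb{N}$ options $\{1,\dots,k\}$. Each option $u$ has a participation rate $\alpha(u)\in[0,1]$ and a delivery rate $q(u,m)\in(0,1]$ depending also on $m\in\mathcal{M}:=\{0,\frac1n,\frac2n,\dots,1\}$. User $i$ has state $x^i_t\in\{0,1\}$ ($1$ = has a demand). The mean-field is $m_t=\frac1n\sum_{i=1}^n\mathbb{1}(x^i_t=1)\in\mathcal{M}$. Given the option $u^i_t$ assigned to user $i$ and $m_t$, the user's next state has transition probabilities $\mathbb{P}(x^i_{t+1}=1\mid x^i_t=0,u^i_t,m_t)=(1-\alpha(u^i_t))p$, $\mathbb{P}(x^i_{t+1}=0\mid x^i_t=0,u^i_t,m_t)=1-(1-\alpha(u^i_t))p$, $\mathbb{P}(x^i_{t+1}=0\mid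 x^i_t=1,u^i_t,m_t)=q(u^i_t,m_t)$, $\mathbb{P}(x^i_{t+1}=1\mid x^i_t=1,u^i_t,m_t)=1-q(u^i_t,m_t)$; conditionally on the current joint states and actions, the users' transitions are mutually independent. Admissible control laws have the form $u^i_t=g_t(x^i_t,m_{1:t})$ with $g_t:\{0,1\}\times\mathcal{M}^t\to\{1,\dots,k\}$ (the same for all users). The reserve action is $g^r_t:=g_t(0,m_{1:t})$ and the demand action is $g^d_t:=g_t(1,m_{1:t})$, so $u^i_t=\mathbb{1}(x^i_t=0)g^r_t+\mathbb{1}(x^i_t=1)g^d_t$. *)

(* Defs.v *)
From mathcomp Require Import all_boot all_order all_algebra.
Set Implicit Arguments. Unset Strict Implicit. Unset Printing Implicit Defensive.
Import Order.TTheory GRing.Theory Num.Theory.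
Local Open Scope ring_scope.

(* Joint state of the n users: x i = true  <->  user i has a demand. *)
Definition jstate (n : nat) := {ffun 'I_n -> bool}.

(* Mean-field m = (number of users in state 1)/n, encoded by the count c in
   {0,..,n}, i.e. m = c/n.  The mean-field space M is thus 'I_n.+1. *)
Definition cnt (n : nat) (x : jstate n) : 'I_n.+1 := inord #|[set i | x i]|.

(* Admissible control law: g t b h = g_t(b, m_{1:t}) with b = x^i_t and
   h = m_{1:t} (time t starts at 1; options are 'I_k, i.e. {1..k} shifted). *)
Definition ctrl_law (n k : nat) := nat -> bool -> seq 'I_n.+1 -> 'I_k.

Definition trans1 (R : realFieldType) (n k : nat) (p : R) (alpha : 'I_k -> R)
  (q : 'I_k -> 'I_n.+1 -> R) (u : 'I_k) (c : 'I_n.+1) (b b' : bool) : R :=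
  if b then (if b' then 1 - q u c else q u c)
  else (if b' then (1 - alpha u) * p else 1 - (1 - alpha u) * p).

Definition jtrans (R : realFieldType) (n k : nat) (p : R) (alpha : 'I_k -> R)
  (q : 'I_k -> 'I_n.+1 -> R) (g : ctrl_law n k) (t : nat) (h : seq 'I_n.+1)
  (x x' : jstate n) : R :=
  \prod_(i < n) trans1 p alpha q (g t (x i) h) (cnt x) (x i) (x' i).

Definition pathprob (R : realFieldType) (n k : nat) (p : R) (alpha : 'I_k -> R)
  (q : 'I_k -> 'I_n.+1 -> R) (init : {ffun jstate n -> R}) (g : ctrl_law n k)
  (xs : seq (jstate n)) : R :=
  let x0 : jstate n := [ffun => false] in
  let hs := map (@cnt n) xs in
  if xs is x1 :: _ then
    init x1 * \prod_(j < (size xs).-1)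
       jtrans p alpha q g j.+1 (take j.+1 hs) (nth x0 xs j) (nth x0 xs j.+1)
  else 0.

Definition mhist_prob (R : realFieldType) (n k : nat) (p : R) (alpha : 'I_k -> R)
  (q : 'I_k -> 'I_n.+1 -> R) (init : {ffun jstate n -> R}) (g : ctrl_law n k)
  (h : seq 'I_n.+1) : R :=
  \sum_(xs : (size h).-tuple (jstate n) | map (@cnt n) xs == h)
     pathprob p alpha q init g xs.

(* Main.v *)
Require Import Defs.
From mathcomp Require Import all_boot all_order all_algebra.
From mathcomp Require Import perm.
Set Implicit Arguments. Unset Strict Implicit. Unset Printing Implicit Defensive.
Import Order.TTheory GRing.Theory Num.Theory.
Local Open Scope ring_scope.

Lemma cntE n (x : {ffun 'I_n -> bool}) : count_mem true (map x (enum 'I_n)) = #|[set i | x i]|.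
Proof.
rewrite count_map cardE /enum_mem size_filter count_filter; apply: eq_count => i /=.
by rewrite !inE; case: (x i).
Qed.

Lemma permx n (x y : {ffun 'I_n -> bool}) : #|[set i | x i]| = #|[set i | y i]| ->
  exists p : 'S_n, forall i, x i = y (p i).
Proof.
move=> H.
have : perm_eq (map x (enum 'I_n)) [tuple y i | i < n].
  apply/allP => b _ /=.
  have E s : count_mem false s = (size s - count_mem true s)%N.
    rewrite -(count_predC (pred1 true) s) addKn; apply: eq_count => c /=; by case: c.
  by case: b; rewrite ?E !cntE H ?size_map.
move/tuple_permP => [p Hp]; exists p => i.
have Hp' : [tuple x i | i < n] = [tuple tnth [tuple y i0 | i0 < n] (p i) | i < n].
  by apply: val_inj; rewrite /=; exact: Hp.
by have := congr1 (fun t => tnth t i) Hp'; rewrite !tnth_mktuple.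
Qed.

Lemma cnt_perm n (p : 'S_n) (w : jstate n) : cnt [ffun i => w (p i)] = cnt w.
Proof.
rewrite /cnt; congr inord.
have -> : [set i | [ffun i => w (p i)] i] = p @^-1: [set i | w i].
  by apply/setP => i; rewrite !inE ffunE.
by rewrite card_preimset //; exact: perm_inj.
Qed.

Definition Fg (R : realFieldType) (n k : nat) (p : R) (alpha : 'I_k -> R)
  (q : 'I_k -> 'I_n.+1 -> R) (u : bool -> 'I_k) (x : jstate n) (m' : 'I_n.+1) : R :=
  \sum_(y : jstate n | cnt y == m') \prod_(i < n) trans1 p alpha q (u (x i)) (cnt x) (x i) (y i).

Lemma Finv (R : realFieldType) (n k : nat) (p : R) (alpha : 'I_k -> R)
  (q : 'I_k -> 'I_n.+1 -> R) u (x y : jstate n) m' :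
  cnt x = cnt y -> Fg p alpha q u x m' = Fg p alpha q u y m'.
Proof.
move=> Hc.
have Hcard : #|[set i | x i]| = #|[set i | y i]|.
  have Hb (z : jstate n) : (#|[set i | z i]| < n.+1)%N.
    by rewrite ltnS; apply: leq_trans (max_card _) _; rewrite card_ord.
  by have := congr1 (@nat_of_ord _) Hc; rewrite /cnt !inordK.
have [s Hs] := permx Hcard.
rewrite /Fg Hc.
rewrite (reindex (fun w : jstate n => [ffun i => w (s i)])); last first.
  apply: onW_bij; exists (fun z : jstate n => [ffun i => z ((s^-1)%g i)]).
    by move=> w; apply/ffunP => i; rewrite !ffunE permKV.
  by move=> w; apply/ffunP => i; rewrite !ffunE permK.
apply: eq_big => [w|w _]; first by rewrite cnt_perm.
rewrite [RHS](reindex_inj (@perm_inj _ s)); apply: eq_bigr => i _.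
by rewrite Hs ffunE.
Qed.

Section TupleSplit.
Variables (T : finType) (N : nat).

Lemma blt_size (t : N.+1.-tuple T) : size (belast (thead t) (behead t)) == N.
Proof. by rewrite size_belast size_behead size_tuple. Qed.

Definition blt (t : N.+1.-tuple T) : N.-tuple T := Tuple (blt_size t).

Lemma th_eta (t : N.+1.-tuple T) :
  rcons (belast (thead t) (behead t)) (last (thead t) (behead t)) = t.
Proof. by rewrite -lastI {3}(tuple_eta t). Qed.

Lemma sum_tuple_rcons (R : realFieldType) (F : seq T -> R) :
  \sum_(xs : N.+1.-tuple T) F xs = \sum_(ys : N.-tuple T) \sum_(y : T) F (rcons ys y).
Proof.
rewrite pair_big /=.
rewrite (reindex (fun pr : N.-tuple T * T => [tuple of rcons pr.1 pr.2])) //.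
apply: onW_bij; exists (fun t => (blt t, last (thead t) (behead t))).
  case=> [[s Hs] y].
  have := th_eta [tuple of rcons (Tuple Hs, y).1 (Tuple Hs, y).2].
  move=> /= /rcons_inj [E1 E2].
  by rewrite /blt; congr pair => //; apply: val_inj; rewrite /= E1.
by move=> t; apply/val_inj; rewrite /= th_eta.
Qed.
End TupleSplit.

Lemma take_rcons_le (T : Type) m (s : seq T) z : (m <= size s)%N -> take m (rcons s z) = take m s.
Proof.
move=> Hm; rewrite -cats1 take_cat; case: ltnP => // H.
have -> : m = size s by apply/eqP; rewrite eqn_leq Hm H.
by rewrite subnn take0 cats0 take_size.
Qed.

Lemma pathprob_rcons (R : realFieldType) (n k : nat) (p : R) (alpha : 'I_k -> R)
  (q : 'I_k -> 'I_n.+1 -> R) (init : {ffun jstate n -> R}) (g : ctrl_law n k)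
  (ys : seq (jstate n)) y : ys != [::] ->
  pathprob p alpha q init g (rcons ys y) =
  pathprob p alpha q init g ys *
  jtrans p alpha q g (size ys) (map (@cnt n) ys) (last [ffun => false] ys) y.
Proof.
case: ys => [//|y0 s] _.
rewrite /pathprob rcons_cons /= size_rcons big_ord_recr /= mulrA.
congr (_ * _ * _).
  apply: eq_bigr => j _.
  have Hj : (j < size s)%N := ltn_ord j.
  rewrite map_rcons take_rcons_le; last by rewrite size_map ltnW.
  rewrite -rcons_cons !nth_rcons /= Hj ltnS ltnW //.
rewrite map_rcons take_rcons_le ?size_map // take_oversize ?size_map //.
rewrite -rcons_cons !nth_rcons /= ltnS leqnn ltnn eqxx.
by rewrite -[size s]/((size (y0 :: s)).-1) nth_last.
Qed.


Definition Kdef (R : realFieldType) (n k : nat) (p : R) (alpha : 'I_k -> R)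
  (q : 'I_k -> 'I_n.+1 -> R) (c : 'I_n.+1) (a b : 'I_k) (m' : 'I_n.+1) : R :=
  match [pick x : jstate n | cnt x == c] with
  | Some x => Fg p alpha q (fun bb => if bb then b else a) x m'
  | None => 0
  end.

Theorem theorem1 (R : realFieldType) (n k : nat) (p : R)
  (alpha : 'I_k -> R) (q : 'I_k -> 'I_n.+1 -> R) :
  (0 < n)%N -> 0 < p < 1 ->
  (forall u, 0 <= alpha u <= 1) ->
  (forall u c, 0 < q u c <= 1) ->
  exists K : 'I_n.+1 -> 'I_k -> 'I_k -> 'I_n.+1 -> R,
    forall (init : {ffun jstate n -> R}) (g : ctrl_law n k),
      (forall x, 0 <= init x) -> \sum_x init x = 1 ->
      forall (t : nat) (h : seq 'I_n.+1),
        (0 < t)%N -> size h = t ->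
        0 < mhist_prob p alpha q init g h ->
        forall m' : 'I_n.+1,
          mhist_prob p alpha q init g (rcons h m') / mhist_prob p alpha q init g h
          = K (last ord0 h) (g t false h) (g t true h) m'.
Proof.
move=> _ _ _ _; exists (Kdef p alpha q).
move=> init g _ _ t h t0 Hsz Hpos m'.
set Kv := Kdef _ _ _ _ _ _ _.
suff -> : mhist_prob p alpha q init g (rcons h m') = Kv * mhist_prob p alpha q init g h.
  by rewrite mulfK // gt_eqF.
rewrite /mhist_prob.
have -> : size (rcons h m') = (size h).+1 by rewrite size_rcons.
rewrite big_mkcond /=.
rewrite (@sum_tuple_rcons {ffun 'I_n -> bool} (size h) R (fun xs : seq (jstate n) => if map (@cnt n) xs == rcons h m' then pathprob p alpha q init g xs else 0)).
rewrite mulr_sumr [RHS]big_mkcond.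
apply: eq_bigr => ys _.
under eq_bigr => y _ do rewrite map_rcons eqseq_rcons.
have [Hys|Hys] /= := eqVneq (map (@cnt n) ys) h; last by rewrite big1.
case: ys Hys => [[|y0 s] Hs] Hys; rewrite [tval _]/= in Hys *.
  by move: t0; rewrite -Hsz -Hys.
set x0 : jstate n := [ffun => false].
under eq_bigr => y _ do rewrite pathprob_rcons //.
rewrite -big_mkcond -mulr_sumr mulrC; congr (_ * _).
have Hl : last ord0 h = cnt (last y0 s) by rewrite -Hys /= last_map.
have Hst : size (y0 :: s) = t by rewrite -Hsz -Hys size_map.
rewrite Hst Hys /Kv /Kdef.
case: pickP => [x /eqP Hx | Hn]; last by have := Hn (last y0 s); rewrite -Hl eqxx.
rewrite (@Finv _ _ _ p alpha q _ x (last y0 s)) ?Hx // /Fg /=.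
apply: eq_bigr => y _; apply: eq_bigr => i _ /=.
by case: (last y0 s i).
Qed.
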